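(* Assume standing assumption (A), let $(x^*,\lambda^* )$ be a KKT pair, let $\rho>0$, and let $\hat x\in X$, $\hat\lambda\in\mathbb R^J_+$ be fixed vectors. Let $C:X\times\mathbb R^J_+\to\mathbb R$ be a function such that $$F(x)^T(\hat x-x)+J^{-1}f(\hat x)^T\lambda\ \le\ \Phi_\rho(x,\hat\lambda)+C(x,\lambda)\qquad\text{for all }x\in X,\ \lambda\in\mathbb R^J_+.$$ Then: (i) $J^{-1}\mathbf 1^T[f(\hat x)]_+\le C(x^*,\tilde\lambda)$, where $\tilde\lambda\in\mathbb R^J_+$ is defined by $\tilde\lambda_j=1+\lambda^*_j$ if $f_j(\hat x)>0$ and $\tilde\lambda_j=0$ otherwise; (ii) $\sup_{x\in\mathcal X}F(x)^T(\hat x-x)\le\sup_{x\in\mathcal X}C(x,0)$.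
   Context: Let $n,J\ge 1$ be integers, $[J]=\{1,\dots,J\}$, $X\subseteq\mathbb R^n$, $F:\mathbb R^n\to\mathbb R^n$, and $f_1,\dots,f_J:\mathbb R^n\to\mathbb R$; write $f(x)=(f_1(x),\dots,f_J(x))^T$, $[a]_+=\max(a,0)$ componentwise, $\mathbf 1$ the all-ones vector, and $\mathcal X=\{x\in X: f_j(x)\le 0\ \forall j\in[J]\}$. Standing assumption (A): (i) $F$ is continuous and monotone on $X$; (ii) each $f_j$ is convex; (iii) $X$ is nonempty, compact and convex; (iv) (Slater) there exists $\hat x\in X$ with $f_j(\hat x)<0$ for all $j$. A pair $(x^*,\lambda^* )$ is a KKT pair if: $x^*\in X$; $\lambda^*\ge 0$, $f(x^* )\le 0$, $\lambda_j^*f_j(x^* )=0$ for all $j$; and there exist $g_j\in\partial f_j(x^* )$ with $0\in F(x^* )+J^{-1}\sum_j\lambda_j^*g_j+\mathcal N_X(x^* )$. For $\rho>0$, $u,v\in\mathbb R$ let $\phi_\rho(u,v)=uv+\frac{\rho}{2}u^2$ if $\rho u+v\ge 0$ and $\phi_\rho(u,v)=-\frac{v^2}{2\rho}$ otherwise, and for $x\in\mathbb R^n$, $\lambda\in\mathbb R^J$ let $\Phi_\rho(x,\lambda)=\frac1J\sum_{j=1}^J\phi_\rho(f_j(x),\lambda^{(j)})$, where $\lambda^{(j)}$ is the $j$-th component of $\lambda$. *)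

(* Defs.v *)
From HB Require Import structures.
From mathcomp Require Import all_boot all_order all_algebra.
From mathcomp Require Import all_classical all_reals all_analysis.
Set Implicit Arguments. Unset Strict Implicit. Unset Printing Implicit Defensive.
Import Order.TTheory GRing.Theory Num.Theory.
Import numFieldNormedType.Exports.
Local Open Scope classical_set_scope.
Local Open Scope ring_scope.

Section Defs.
Variable R : realType.

Definition dotp (n : nat) (u v : 'rV[R]_n) : R := \sum_(i < n) u 0 i * v 0 i.

Definition convex_set (n : nat) (X : set 'rV[R]_n) : Prop :=
  forall x y (t : R), X x -> X y -> 0 <= t -> t <= 1 -> X (t *: x + (1 - t) *: y).

Definition convex_fun (n : nat) (g : 'rV[R]_n -> R) : Prop :=
  forall x y (t : R), 0 <= t -> t <= 1 ->
    g (t *: x + (1 - t) *: y) <= t * g x + (1 - t) * g y.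

Definition monotone_on (n : nat) (F : 'rV[R]_n -> 'rV[R]_n) (X : set 'rV[R]_n) : Prop :=
  forall x y, X x -> X y -> 0 <= dotp (F x - F y) (x - y).

Definition subdiff (n : nat) (g : 'rV[R]_n -> R) (x : 'rV[R]_n) : set 'rV[R]_n :=
  [set s | forall y, g x + dotp s (y - x) <= g y].

Definition normal_cone (n : nat) (X : set 'rV[R]_n) (x : 'rV[R]_n) : set 'rV[R]_n :=
  [set v | forall y, X y -> dotp v (y - x) <= 0].

Definition standing_A (n J : nat) (X : set 'rV[R]_n) (F : 'rV[R]_n -> 'rV[R]_n)
    (f : 'I_J -> 'rV[R]_n -> R) : Prop :=
  [/\ {within X, continuous F} /\ monotone_on F X,
      (forall j, convex_fun (f j)),
      [/\ X !=set0, compact X & convex_set X] &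
      exists xs, X xs /\ forall j, f j xs < 0].

Definition KKT_pair (n J : nat) (X : set 'rV[R]_n) (F : 'rV[R]_n -> 'rV[R]_n)
    (f : 'I_J -> 'rV[R]_n -> R) (xs : 'rV[R]_n) (ls : 'rV[R]_J) : Prop :=
  [/\ X xs,
      (forall j, 0 <= ls 0 j /\ f j xs <= 0 /\ ls 0 j * f j xs = 0) &
      exists g : 'I_J -> 'rV[R]_n, (forall j, subdiff (f j) xs (g j)) /\
        normal_cone X xs (- (F xs + J%:R^-1 *: \sum_(j < J) ls 0 j *: g j))].

Definition phi (rho u v : R) : R :=
  if 0 <= rho * u + v then u * v + rho / 2 * u ^+ 2 else - (v ^+ 2 / (2 * rho)).

Definition Phi (n J : nat) (f : 'I_J -> 'rV[R]_n -> R) (rho : R)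
    (x : 'rV[R]_n) (l : 'rV[R]_J) : R :=
  J%:R^-1 * \sum_(j < J) phi rho (f j x) (l 0 j).

Definition fvec (n J : nat) (f : 'I_J -> 'rV[R]_n -> R) (x : 'rV[R]_n) : 'rV[R]_J :=
  \row_(j < J) f j x.

Definition nonneg_vec (J : nat) (l : 'rV[R]_J) : Prop := forall j, 0 <= l 0 j.

Definition feasible (n J : nat) (X : set 'rV[R]_n) (f : 'I_J -> 'rV[R]_n -> R) :
  set 'rV[R]_n := [set x | X x /\ forall j, f j x <= 0].

End Defs.

(* Main.v *)
Require Import Defs.
From HB Require Import structures.
From mathcomp Require Import all_boot all_order all_algebra.
From mathcomp Require Import all_classical all_reals all_analysis.
Import Order.TTheory GRing.Theory Num.Theory.
Import numFieldNormedType.Exports.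
Local Open Scope classical_set_scope.
Local Open Scope ring_scope.
From mathcomp Require Import ring lra.

Section H.
Variable R : realType.

Lemma dotpDl n (u w v : 'rV[R]_n) : dotp (u + w) v = dotp u v + dotp w v.
Proof. rewrite /dotp -big_split /=; apply: eq_bigr => i _; rewrite !mxE mulrDl//. Qed.
Lemma dotpNl n (u v : 'rV[R]_n) : dotp (- u) v = - dotp u v.
Proof. rewrite /dotp -sumrN; apply: eq_bigr => i _; rewrite !mxE mulNr//. Qed.
Lemma dotpZl n a (u v : 'rV[R]_n) : dotp (a *: u) v = a * dotp u v.
Proof. rewrite /dotp mulr_sumr; apply: eq_bigr => i _; rewrite !mxE mulrA//. Qed.
Lemma dotp_suml n J (g : 'I_J -> 'rV[R]_n) v :
  dotp (\sum_(j < J) g j) v = \sum_(j < J) dotp (g j) v.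
Proof.
rewrite /dotp.
under eq_bigr do rewrite summxE mulr_suml.
by rewrite exchange_big.
Qed.

Lemma phi_le0 (rho u v : R) : 0 < rho -> u <= 0 -> 0 <= v -> phi rho u v <= 0.
Proof.
move=> hr hu hv; rewrite /phi; case: ifP => h.
  have h1 : u * (rho * u + v) <= 0 by rewrite mulr_le0_ge0.
  have h2 : 0 <= rho / 2 * u ^+ 2 by rewrite mulr_ge0 ?sqr_ge0 ?divr_ge0 ?ltW.
  have -> : u * v + rho / 2 * u ^+ 2 = u * (rho * u + v) - rho / 2 * u ^+ 2.
    by rewrite expr2; field.
  lra.
have : 0 <= v ^+ 2 / (2 * rho) by rewrite divr_ge0 ?sqr_ge0 // mulr_ge0 // ltW.
lra.
Qed.

Lemma Phi_le0 n J (f : 'I_J -> 'rV[R]_n -> R) rho x l :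
  0 < rho -> (forall j, f j x <= 0) -> nonneg_vec l -> Phi f rho x l <= 0.
Proof.
move=> hr hf hl; rewrite /Phi mulr_ge0_le0 // ?invr_ge0 ?ler0n //.
by apply: sumr_le0 => j _; apply: phi_le0.
Qed.
End H.


Theorem mainTheorem3 (R : realType) (n J : nat) (X : set 'rV[R]_n)
    (F : 'rV[R]_n -> 'rV[R]_n) (f : 'I_J -> 'rV[R]_n -> R)
    (xs : 'rV[R]_n) (ls : 'rV[R]_J) (rho : R)
    (xh : 'rV[R]_n) (lh : 'rV[R]_J) (C : 'rV[R]_n -> 'rV[R]_J -> R) :
  (0 < n)%N -> (0 < J)%N ->
  standing_A X F f ->
  KKT_pair X F f xs ls ->
  0 < rho ->
  X xh -> nonneg_vec lh ->
  (forall x l, X x -> nonneg_vec l ->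
     dotp (F x) (xh - x) + J%:R^-1 * dotp (fvec f xh) l <= Phi f rho x lh + C x l) ->
  (J%:R^-1 * \sum_(j < J) Num.max (f j xh) 0
     <= C xs (\row_(j < J) (if 0 < f j xh then 1 + ls 0 j else 0)))
  /\
  (ereal_sup [set (dotp (F x) (xh - x))%:E | x in feasible X f]
     <= ereal_sup [set (C x 0)%:E | x in feasible X f])%E.
Proof.

Proof.
move=> _ J0 _ [Xxs hls [g [hg hnc]]] hr Xxh hlh H.
have Jpos : 0 < J%:R^-1 :> R by rewrite invr_gt0 ltr0n.
split.
  set lt := \row_(j < J) _.
  have lt0 : nonneg_vec lt.
    move=> j; rewrite mxE; case: ifP => // _.
    by have [? _] := hls j; rewrite addr_ge0.
  have H1 := H xs lt Xxs lt0.
  have P0 : Phi f rho xs lh <= 0 by apply: Phi_le0 => // j; have [_ []] := hls j.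
  have NC := hnc xh Xxh.
  rewrite dotpNl dotpDl dotpZl dotp_suml oppr_le0 in NC.
  have E : dotp (fvec f xh) lt = \sum_(j < J) Num.max (f j xh) 0 +
       \sum_(j < J) (if 0 < f j xh then ls 0 j * f j xh else 0).
    rewrite /dotp -big_split /=; apply: eq_bigr => j _; rewrite !mxE.
    case: ifP => h.
      by rewrite (max_idPl (ltW h)); ring.
    have hle : f j xh <= 0 by rewrite leNgt h.
    by rewrite (max_idPr hle) mulr0 addr0.
  have S : \sum_(j < J) dotp (ls 0 j *: g j) (xh - xs) <=
           \sum_(j < J) (if 0 < f j xh then ls 0 j * f j xh else 0).
    apply: ler_sum => j _; rewrite dotpZl.
    have [l0 [_ lf]] := hls j.
    have h2 : ls 0 j * dotp (g j) (xh - xs) <= ls 0 j * f j xh.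
      by have := ler_wpM2l l0 (hg j xh); rewrite mulrDr lf add0r.
    case: ifP => h //.
    apply: le_trans h2 _; rewrite mulr_ge0_le0 //; rewrite leNgt h //.
  have S' := ler_wpM2l (ltW Jpos) S.
  rewrite E mulrDr in H1.
  lra.
apply: ge_ereal_sup => _ [x [Xx hx] <-].
apply: le_trans (ereal_sup_ubound _); last by exists x.
rewrite lee_fin.
have z0 : nonneg_vec (0 : 'rV[R]_J) by move=> j; rewrite mxE.
have H1 := H x 0 Xx z0.
have P0 : Phi f rho x lh <= 0 by apply: Phi_le0.
have D0 : dotp (fvec f xh) 0 = 0 by rewrite /dotp big1 // => i _; rewrite !mxE mulr0.
rewrite D0 mulr0 addr0 in H1; lra.
Qed.
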